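(* For integers $n\ge0$ and $0\le i\le n/2$ let $g(i,n)=\binom{2(n-i)}{n-i}^2\binom{n-i}{i}$. Let $p$ be an odd prime, $m,r$ positive integers, and $j$ an integer with $0\le j\le mp^{r-1}/2$. Then $$g(jp,mp^r)\equiv g(j,mp^{r-1})\pmod{p^r}.$$ *)

(* Defs.v *)
From mathcomp Require Import all_boot.
Definition g (i n : nat) : nat := 'C((n - i).*2, n - i) ^ 2 * 'C(n - i, i).

(* Main.v *)
Require Import Defs.
From mathcomp Require Import all_boot.
From mathcomp Require Import ring zify.

Fixpoint F (p n : nat) : nat :=
  match n with 0 => 1 | n'.+1 => F p n' * (if p %| n'.+1 then 1 else n'.+1) end.

Lemma fact_F p n : 0 < p -> n`! = p ^ (n %/ p) * (n %/ p)`! * F p n.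
Proof.
move=> p0; elim: n => [|n IH]; first by rewrite div0n.
rewrite factS /= divnS // IH.
case: ifP => H.
  have E : n.+1 = p * (n %/ p).+1.
    by rewrite -[n.+1](divnK H) divnS // H mulnC.
  rewrite E add1n factS expnS muln1; ring.
rewrite add0n; ring.
Qed.

Lemma binom_F p a b : 0 < p -> b <= a ->
  'C(p*a, p*b) * (F p (p*b) * F p (p*(a-b))) = 'C(a,b) * F p (p*a).
Proof.
move=> p0 ba.
have h1 := bin_fact (leq_mul (leqnn p) ba).
have h2 := bin_fact ba.
rewrite -mulnBr (fact_F p (p*b) p0) (fact_F p (p*(a-b)) p0) (fact_F p (p*a) p0) !mulKn // in h1.
have K : 0 < (p ^ b * p ^ (a-b)) * (b`! * (a-b)`!).
  by rewrite !muln_gt0 !expn_gt0 p0 !fact_gt0.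
apply/eqP; rewrite -(eqn_pmul2l K); apply/eqP.
have e : p ^ a = p ^ b * p ^ (a-b) by rewrite -expnD subnKC.
rewrite e in h1.
transitivity ('C(p * a, p * b) * (p ^ b * b`! * F p (p * b) * (p ^ (a - b) * (a - b)`! * F p (p * (a - b))))).
  ring.
rewrite h1 -h2; ring.
Qed.

Lemma F_coprime p n : prime p -> coprime (F p n) p.
Proof.
move=> pp; elim: n => [|n IH] /=; first exact: coprime1n.
rewrite coprimeMl IH /=; case: ifP => H; first exact: coprime1n.
by rewrite coprime_sym prime_coprime // H.
Qed.

Lemma F_shift p q c k : p %| q -> F p (q*c + k) = F p (q*c) * F p k %[mod q].
Proof.
move=> pq; elim: k => [|k IH]; first by rewrite addn0 muln1.
rewrite addnS /= -addnS.
have -> : (p %| q * c + k.+1) = (p %| k.+1) by rewrite dvdn_addr // dvdn_mulr.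
rewrite mulnA -modnMml IH modnMml.
case: ifP => _ //.
by rewrite -modnMmr -[in RHS]modnMmr [q * c]mulnC modnMDl.
Qed.


Lemma F_pow p q c : p %| q -> F p (q*c) = F p q ^ c %[mod q].
Proof.
move=> pq; elim: c => [|c IH]; first by rewrite muln0.
by rewrite mulnS addnC (F_shift p q c q pq) -modnMml IH modnMml expnS mulnC.
Qed.

Lemma term_ineq q N j (i : bool) : 0 < q -> j <= N ->
  (i -> (q %| N + j) && ~~ (q %| j)) ->
  (N %/ q).*2 + j %/ q + (N-j) %/ q + i <= N.*2 %/ q + N %/ q.
Proof.
move=> q0 jN; rewrite /dvdn => hi.
have e1 := divnD N N q0.
have e2 := divnD j (N - j) q0.
have e3 := modnD j (N - j) q0.
have e4 := modnD N j q0.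
rewrite subnKC // in e2 e3.
rewrite -!addnn.
have la := ltn_pmod N q0. have lb := ltn_pmod j q0. have lc := ltn_pmod (N-j) q0.
move: e1 e2 e3 e4 la lb lc hi.
set a := N %% q. set b := j %% q. set c := (N-j) %% q.
move: (N %/ q) (j %/ q) ((N-j) %/ q) ((N + j) %% q) ((N + N) %/ q) => x y z w u.
clearbody a b c. clear jN.
case: i; case: (leqP q (a + b)); case: (leqP q (b + c)); case: (leqP q (a + a)); simpl => e1 e2 e3 e4 la lb lc hi; try lia.
all: move: hi => /(_ isT) /andP[/eqP ? ?]; lia.
Qed.

Lemma logn_fact_ext p n B : prime p -> n < B ->
  logn p n`! = \sum_(1 <= k < B) n %/ p ^ k.
Proof.
move=> pp nB; rewrite logn_fact // [RHS](@big_cat_nat _ _ _ n.+1) // -[LHS]addn0.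
congr (_ + _); symmetry.
rewrite big_nat_cond big1 // => k /andP[/andP[hk _] _].
apply: divn_small; apply: leq_trans hk (ltnW (ltn_expl k (prime_gt1 pp))).
Qed.

Lemma val_bound p N j t r : prime p -> j <= N -> p ^ r %| N + j ->
  ~~ (p ^ t.+1 %| j) -> p ^ (r - t) %| 'C(N.*2, N) * 'C(N, j).
Proof.
move=> pp jN hr ht.
have j0 : 0 < j by case: j ht {jN hr} => //; rewrite dvdn0.
have N2 : N <= N.*2 by rewrite -addnn leq_addr.
rewrite pfactor_dvdn // ?muln_gt0 ?bin_gt0 ?jN ?N2 // lognM ?bin_gt0 //.
have h1 := bin_fact N2. rewrite -{2}addnn addnK in h1.
have h2 := bin_fact jN.
have l1 : logn p 'C(N.*2, N) + (logn p N`! + logn p N`!) = logn p N.*2`!.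
  by rewrite -h1 !lognM ?muln_gt0 ?bin_gt0 ?N2 ?fact_gt0.
have l2 : logn p 'C(N, j) + (logn p j`! + logn p (N-j)`!) = logn p N`!.
  by rewrite -h2 !lognM ?muln_gt0 ?bin_gt0 ?jN ?fact_gt0.
set B := (N.*2 + r).+1.
have nB : forall n, n <= N.*2 -> n < B.
  by move=> n hn; rewrite /B ltnS (leq_trans hn) ?leq_addr.
have jN2 : j <= N.*2 by exact: leq_trans jN N2.
have NjN2 : N - j <= N.*2 by exact: leq_trans (leq_subr _ _) N2.
rewrite (@logn_fact_ext p (N.*2) B pp (nB _ (leqnn _))) (@logn_fact_ext p N B pp (nB _ N2)) in l1.
rewrite (@logn_fact_ext p j B pp (nB _ jN2)) (@logn_fact_ext p N B pp (nB _ N2)) in l2.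
rewrite (@logn_fact_ext p (N-j) B pp (nB _ NjN2)) in l2.
have key : \sum_(1 <= k < B) ((N %/ p ^ k).*2 + j %/ p ^ k + (N-j) %/ p ^ k + (t < k <= r))
   <= \sum_(1 <= k < B) (N.*2 %/ p ^ k + N %/ p ^ k).
  apply: leq_sum => k _; apply: term_ineq => //; first by rewrite expn_gt0 prime_gt0.
  case/andP => tk kr; apply/andP; split.
    exact: dvdn_trans (dvdn_exp2l p kr) hr.
  by apply: contra ht => hk; apply: dvdn_trans (dvdn_exp2l p tk) hk.
have cnt : r - t <= \sum_(1 <= k < B) (t < k <= r).
  case: (leqP r t) => rt; first by move: rt; rewrite -subn_eq0 => /eqP ->.
  have rB : r.+1 <= B by rewrite /B ltnS leq_addl.
  rewrite (@big_cat_nat _ _ _ t.+1) //; last exact: ltn_trans rt rB.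
  apply: leq_trans (leq_addl _ _).
  rewrite (@big_cat_nat _ _ _ r.+1) //; last exact: ltnW.
  apply: leq_trans (leq_addr _ _).
  rewrite (@eq_big_nat _ _ _ t.+1 r.+1 _ (fun=> 1)) ?sum_nat_const_nat ?muln1 ?subSS //.
  by move=> i /andP[h1' h2']; rewrite h1' -ltnS h2'.
rewrite !big_split /= in key.
have e : \sum_(1 <= k < B) (N %/ p ^ k).*2 = \sum_(1 <= k < B) N %/ p ^ k + \sum_(1 <= k < B) N %/ p ^ k.
  by rewrite -big_split; apply: eq_bigr => k _; rewrite -addnn.
rewrite e in key.
lia.
Qed.

Lemma cancel_mod D P g g0 : coprime D P -> g * D = g0 * D %[mod P] -> g = g0 %[mod P].
Proof.
move=> cD h.
have h' : (g * D == g0 * D %[mod P]) by apply/eqP.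
have h'' : (g0 * D == g * D %[mod P]) by rewrite eq_sym.
have cD' : coprime P D by rewrite coprime_sym.
case: (leqP g0 g) => hg.
  apply/eqP; rewrite eqn_mod_dvd //.
  rewrite eqn_mod_dvd in h'; last by rewrite leq_mul2r hg orbT.
  by rewrite -mulnBl Gauss_dvdl in h'.
have hg' := ltnW hg.
apply/esym/eqP; rewrite eqn_mod_dvd //.
rewrite eqn_mod_dvd in h''; last by rewrite leq_mul2r hg' orbT.
by rewrite -mulnBl Gauss_dvdl in h''.
Qed.

Lemma final d q g g0 D E : g * D = g0 * E -> d %| g0 -> D = E %[mod q] ->
  coprime D (d * q) -> g = g0 %[mod d * q].
Proof.
move=> e /dvdnP [h hg0] hDE cD; subst g0.
apply: (@cancel_mod D (d*q) g (h*d) cD); rewrite e.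
rewrite [h * d]mulnC -!mulnA -!muln_modr.
by congr (d * _); rewrite -modnMmr -hDE modnMmr.
Qed.


Lemma modM a b a' b' q : a = a' %[mod q] -> b = b' %[mod q] -> a*b = a'*b' %[mod q].
Proof. by move=> ha hb; rewrite -modnMm ha hb modnMm. Qed.

Lemma modX k a a' q : a = a' %[mod q] -> a ^ k = a' ^ k %[mod q].
Proof. by move=> ha; rewrite -modnXm ha modnXm. Qed.

Lemma eDE_gen X Y X0 Y0 a b c e : X * (a * a) = X0 * e -> Y * (b * c) = Y0 * a ->
  X ^ 2 * Y * (a ^ 4 * b * c) = X0 ^ 2 * Y0 * (e ^ 2 * a).
Proof.
move=> h1 h2.
transitivity ((X * (a * a)) ^ 2 * (Y * (b * c))); first ring.
rewrite h1 h2; ring.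
Qed.

Arguments modM {a b a' b' q}.
Arguments modX k {a a' q}.

Theorem mainTheorem15 (p m r j : nat) :
  prime p -> odd p -> 0 < m -> 0 < r -> j.*2 <= m * p ^ r.-1 ->
  g (j * p) (m * p ^ r) = g j (m * p ^ r.-1) %[mod p ^ r].
Proof.
move=> pp po m0 r0.
have p0 := prime_gt0 pp.
case: r r0 => // r' _ /= hj.
set M := m * p ^ r' in hj *.
have eM : m * p ^ r'.+1 = p * M by rewrite /M expnS mulnCA.
rewrite eM [j * p]mulnC /g -mulnBr.
set N := M - j.
have jN : j <= N by rewrite /N; lia.
have NjM : N + j = M by rewrite /N subnK //; lia.
rewrite doubleMr.
have N2 : N <= N.*2 by rewrite -addnn leq_addr.
have bX := binom_F p (N.*2) N p0 N2.
have e2 : N.*2 - N = N by rewrite -addnn addnK.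
rewrite e2 in bX.
have bY := binom_F p N j p0 jN.
have hM : p ^ r' %| M by rewrite /M dvdn_mull.
clearbody N M.
set X := 'C(p * N.*2, p * N). set X0 := 'C(N.*2, N).
set Y := 'C(p * N, p * j). set Y0 := 'C(N, j).
set D := F p (p * N) ^ 4 * F p (p * j) * F p (p * (N - j)).
set E := F p (p * N.*2) ^ 2 * F p (p * N).
have eDE : X ^ 2 * Y * D = X0 ^ 2 * Y0 * E by exact: eDE_gen bX bY.
have cD : coprime D p.
  by rewrite /D !coprimeMl !F_coprime.
have [t [tr tj tN tv]] : exists t, [/\ t <= r', p ^ t %| j, p ^ t %| N &
    p ^ (r' - t) %| X0 * Y0].
  case: (boolP (p ^ r' %| j)) => hrj.
    exists r'; rewrite subnn expn0 dvd1n; split => //.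
    by rewrite -(dvdn_addl N hrj) NjM.
  have j0 : 0 < j.
    by rewrite lt0n; apply: contraNneq hrj => ->; rewrite dvdn0.
  have tr : logn p j < r' by rewrite ltnNge -(pfactor_dvdn _ pp j0).
  have tj := pfactor_dvdnn p j.
  exists (logn p j); split => //.
  - exact: ltnW.
  - rewrite -(dvdn_addl N tj) NjM.
    exact: dvdn_trans (dvdn_exp2l p (ltnW tr)) hM.
  - apply: val_bound => //; first by rewrite NjM.
    by rewrite pfactor_dvdn // ltnn.
have eP : p ^ r'.+1 = p ^ (r' - t) * p ^ t.+1 by rewrite -expnD addnS subnK.
rewrite eP.
apply: (@final (p ^ (r' - t)) (p ^ t.+1) (X ^ 2 * Y) (X0 ^ 2 * Y0) D E eDE).
- by rewrite -mulnn -mulnA dvdn_mull.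
- move: tN tj => /dvdnP [N' eN] /dvdnP [j' ej].
  set q := p ^ t.+1.
  have pq : p %| q by rewrite /q expnS dvdn_mulr.
  have pt : 0 < p ^ t by rewrite expn_gt0 p0.
  have jN' : j' <= N' by rewrite -(leq_pmul2r pt) -ej -eN.
  have e1 : p * N = q * N' by rewrite eN /q expnS; ring.
  have e3 : p * j = q * j' by rewrite ej /q expnS; ring.
  have e4 : p * (N - j) = q * (N' - j') by rewrite eN ej -mulnBl /q expnS; ring.
  have e5 : p * N.*2 = q * N'.*2 by rewrite eN /q expnS -!addnn; ring.
  rewrite /D /E e1 e3 e4 e5.
  have c1 := modM (modM (modX 4 (F_pow p q N' pq)) (F_pow p q j' pq)) (F_pow p q (N' - j') pq).
  have c2 := modM (modX 2 (F_pow p q N'.*2 pq)) (F_pow p q N' pq).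
  rewrite c1 c2 -!expnM -!expnD; congr (_ ^ _ %% _); clear - jN'; lia.
- by rewrite -eP coprimeXr.
Qed.
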